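(* Let $X$ and $Y$ be independent nonnegative random variables with continuous distributions $F$ and $G$, and let $H$ be the distribution of $XY$. Suppose that $$\overline F(x-1/x)\sim\overline F(x)\quad\text{and}\quad \overline G(x-1/x)\sim\overline G(x),$$ and that there exists a function $a:[0,\infty)\to(0,\infty)$ such that $a(x)\uparrow\infty$, $x/a(x)\uparrow\infty$, $$\overline G\big(a(x)\big)=O\big(\overline H(x)\big)\quad\text{and}\quad \overline F\big(a(x)\big)=O\big(\overline H(x)\big).$$ Then $H\in\mathcal L$.
   Context: For a distribution $V$, $\overline V=1-V$ denotes its tail. All limits are as $x\to\infty$; $f(x)\sim g(x)$ means $f(x)/g(x)\to1$ and $f(x)=O(g(x))$ means $\limsup f(x)/g(x)<\infty$. The notation $a(x)\uparrow\infty$ means $a$ is nondecreasing and tends to infinity. A distribution $V$ is long-tailed, $V\in\mathcal L$, if $\overline V(x)>0$ for all $x$ and $\overline V(x-t)\sim\overline V(x)$ for every real $t$. *)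

(* Defs.v *)
From Stdlib Require Import Reals.
Open Scope R_scope.

Record prob_space := {
  Omega : Type;
  meas : (Omega -> Prop) -> Prop;
  Pr : (Omega -> Prop) -> R;
  meas_full : meas (fun _ => True);
  meas_compl : forall A, meas A -> meas (fun w => ~ A w);
  meas_union : forall A : nat -> Omega -> Prop,
      (forall n, meas (A n)) -> meas (fun w => exists n, A n w);
  Pr_nonneg : forall A, meas A -> 0 <= Pr A;
  Pr_full : Pr (fun _ => True) = 1;
  Pr_sigma_additive : forall A : nat -> Omega -> Prop,
      (forall n, meas (A n)) ->
      (forall m n, m <> n -> forall w, A m w -> A n w -> False) ->
      infinite_sum (fun n => Pr (A n)) (Pr (fun w => exists n, A n w))
}.

Definition sigma_algebra_R (S : (R -> Prop) -> Prop) : Prop :=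
  S (fun _ => True) /\
  (forall B, S B -> S (fun x => ~ B x)) /\
  (forall B : nat -> R -> Prop, (forall n, S (B n)) -> S (fun x => exists n, B n x)).

Definition borel (B : R -> Prop) : Prop :=
  forall S, sigma_algebra_R S -> (forall a, S (fun x => x <= a)) -> S B.

Definition random_variable (Ps : prob_space) (X : Omega Ps -> R) : Prop :=
  forall B, borel B -> meas Ps (fun w => B (X w)).

Definition independent (Ps : prob_space) (X Y : Omega Ps -> R) : Prop :=
  forall B1 B2, borel B1 -> borel B2 ->
    Pr Ps (fun w => B1 (X w) /\ B2 (Y w)) =
    Pr Ps (fun w => B1 (X w)) * Pr Ps (fun w => B2 (Y w)).

Definition distr (Ps : prob_space) (X : Omega Ps -> R) (x : R) : R :=
  Pr Ps (fun w => X w <= x).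

Definition tail (V : R -> R) (x : R) : R := 1 - V x.

Definition asymp_eq (f g : R -> R) : Prop :=
  forall eps, 0 < eps -> exists M, forall x, M <= x -> Rabs (f x / g x - 1) < eps.

Definition big_O (f g : R -> R) : Prop :=
  exists C M, forall x, M <= x -> Rabs (f x) <= C * Rabs (g x).

Definition tends_to_infty (f : R -> R) : Prop :=
  forall K, exists M, forall x, M <= x -> K <= f x.

Definition nondecr_on_nonneg (f : R -> R) : Prop :=
  forall x y, 0 <= x -> x <= y -> f x <= f y.

Definition long_tailed (V : R -> R) : Prop :=
  (forall x, 0 < tail V x) /\
  (forall t, asymp_eq (fun x => tail V (x - t)) (tail V)).

(* Main.v *)
Require Import Defs.
From Stdlib Require Import Reals Lra Lia ZArith Classical FunctionalExtensionality PropExtensionality.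
Open Scope R_scope.


Section Basics.
Variable Ps : prob_space.

Lemma pred_ext (A B : Omega Ps -> Prop) : (forall w, A w <-> B w) -> A = B.
Proof. intros H; apply functional_extensionality; intros w; apply propositional_extensionality; auto. Qed.

Lemma meas_ext A B : (forall w, A w <-> B w) -> meas Ps A -> meas Ps B.
Proof. intros H; rewrite (pred_ext A B H); auto. Qed.

Lemma Pr_ext A B : (forall w, A w <-> B w) -> Pr Ps A = Pr Ps B.
Proof. intros H; rewrite (pred_ext A B H); auto. Qed.

Lemma meas_empty : meas Ps (fun _ => False).
Proof. apply (meas_ext (fun w => ~ True)); [tauto|]. apply meas_compl, meas_full. Qed.

Lemma meas_or A B : meas Ps A -> meas Ps B -> meas Ps (fun w => A w \/ B w).
Proof.
  intros HA HB.
  apply (meas_ext (fun w => exists n:nat, (match n with O => A | _ => B end) w)).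
  - intros w; split; [intros [[|n] H]; auto|intros [H|H]; [exists O|exists 1%nat]; auto].
  - apply meas_union; intros [|n]; auto.
Qed.

Lemma meas_and A B : meas Ps A -> meas Ps B -> meas Ps (fun w => A w /\ B w).
Proof.
  intros HA HB.
  apply (meas_ext (fun w => ~ (~ A w \/ ~ B w))).
  - intros w; split; [intros H; split; apply NNPP; tauto|tauto].
  - apply meas_compl, meas_or; apply meas_compl; auto.
Qed.

Lemma meas_not A : meas Ps A -> meas Ps (fun w => ~ A w).
Proof. apply meas_compl. Qed.

Lemma Pr_empty : Pr Ps (fun _ => False) = 0.
Proof.
  pose proof (Pr_sigma_additive Ps (fun _ _ => False) (fun _ => meas_empty)) as H.
  cbv beta in H. specialize (H ltac:(tauto)).
  rewrite (Pr_ext (fun w => exists n:nat, False) (fun _ => False)) in H by firstorder.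
  set (p := Pr Ps (fun _ => False)) in *.
  destruct (Req_dec p 0) as [E|E]; auto.
  destruct (H (Rabs p / 2)) as [N HN]. { assert (0 < Rabs p) by (apply Rabs_pos_lt; auto). lra. }
  specialize (HN (S N) ltac:(lia)). rewrite sum_cte in HN. unfold Rdist in HN.
  replace (p * INR (S (S N)) - p) with (p * INR (S N)) in HN by (rewrite !S_INR; ring).
  rewrite Rabs_mult, (Rabs_right (INR _)) in HN by (apply Rle_ge, pos_INR).
  rewrite S_INR in HN. pose proof (pos_INR N). assert (0 < Rabs p) by (apply Rabs_pos_lt; auto). nra.
Qed.

Lemma Pr_add2 A B : meas Ps A -> meas Ps B -> (forall w, A w -> B w -> False) ->
  Pr Ps (fun w => A w \/ B w) = Pr Ps A + Pr Ps B.
Proof.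
  intros HA HB D.
  set (C := fun n:nat => match n with O => A | 1%nat => B | _ => fun _ => False end).
  assert (HC : forall n, meas Ps (C n)) by (intros [|[|n]]; simpl; auto using meas_empty).
  pose proof (Pr_sigma_additive Ps C HC) as H.
  rewrite (Pr_ext (fun w => exists n, C n w) (fun w => A w \/ B w)) in H.
  2:{ intros w; split; [intros [[|[|n]] Hn]; simpl in Hn; tauto|intros [h|h]; [exists O|exists 1%nat]; auto]. }
  assert (D2 : forall m n, m <> n -> forall w, C m w -> C n w -> False).
  { intros m0 n0 Hmn w. destruct m0 as [|[|m0]], n0 as [|[|n0]]; simpl; try tauto; try lia;
    intros; eapply D; eauto. }
  specialize (H D2).
  apply (uniqueness_sum (fun n => Pr Ps (C n))); auto.
  intros eps Heps; exists 1%nat; intros n Hn.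
  assert (E : sum_f_R0 (fun n => Pr Ps (C n)) n = Pr Ps A + Pr Ps B).
  { induction n; [lia|]. destruct n; [simpl; ring|].
    rewrite tech5, IHn by lia. simpl. rewrite Pr_empty; ring. }
  rewrite E; unfold Rdist. replace (Pr Ps A + Pr Ps B - (Pr Ps A + Pr Ps B)) with 0 by ring.
  rewrite Rabs_R0; lra.
Qed.

Lemma Pr_mono A B : meas Ps A -> meas Ps B -> (forall w, A w -> B w) -> Pr Ps A <= Pr Ps B.
Proof.
  intros HA HB I.
  rewrite (Pr_ext B (fun w => A w \/ (B w /\ ~ A w))).
  2:{ intros w; split; [intros h; destruct (classic (A w)); tauto|intros [h|h]; auto; tauto]. }
  rewrite Pr_add2; auto using meas_and, meas_not.
  2:{ intros w; tauto. }
  pose proof (Pr_nonneg Ps _ (meas_and _ _ HB (meas_not _ HA))). lra.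
Qed.

Lemma Pr_sub A B : meas Ps A -> meas Ps B -> Pr Ps (fun w => A w \/ B w) <= Pr Ps A + Pr Ps B.
Proof.
  intros HA HB.
  rewrite (Pr_ext (fun w => A w \/ B w) (fun w => A w \/ (B w /\ ~ A w))).
  2:{ intros w; split; [intros h; destruct (classic (A w)); tauto|intros [h|h]; tauto]. }
  rewrite Pr_add2; auto using meas_and, meas_not.
  2:{ intros w; tauto. }
  pose proof (Pr_mono _ _ (meas_and _ _ HB (meas_not _ HA)) HB (fun w h => proj1 h)). lra.
Qed.

Lemma Pr_compl A : meas Ps A -> Pr Ps (fun w => ~ A w) = 1 - Pr Ps A.
Proof.
  intros HA. rewrite <- (Pr_full Ps).
  rewrite (Pr_ext (fun _ => True) (fun w => A w \/ ~ A w)) by (intros w; split; auto; intros _; apply classic).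
  rewrite Pr_add2; auto using meas_not. ring.
Qed.

Lemma Pr_le1 A : meas Ps A -> Pr Ps A <= 1.
Proof. intros HA. pose proof (Pr_nonneg Ps _ (meas_not _ HA)). rewrite Pr_compl in H; auto. lra. Qed.

Fixpoint fsum (f : nat -> R) (n : nat) : R :=
  match n with O => 0 | S m => fsum f m + f m end.

Lemma meas_fin_union (A : nat -> Omega Ps -> Prop) n : (forall i, meas Ps (A i)) ->
  meas Ps (fun w => exists i, (i < n)%nat /\ A i w).
Proof.
  intros HA. induction n.
  - apply (meas_ext (fun _ => False)); [intros w; split; [tauto|intros [i [h _]]; lia]|apply meas_empty].
  - apply (meas_ext (fun w => (exists i, (i < n)%nat /\ A i w) \/ A n w)).
    + intros w; split.
      * intros [[i [h1 h2]]|h]; [exists i; split; auto; lia|exists n; auto].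
      * intros [i [h1 h2]]. destruct (Nat.eq_dec i n); [subst; auto|left; exists i; split; auto; lia].
    + apply meas_or; auto.
Qed.

Lemma Pr_fin_union (A : nat -> Omega Ps -> Prop) n : (forall i, meas Ps (A i)) ->
  (forall i j w, i <> j -> A i w -> A j w -> False) ->
  Pr Ps (fun w => exists i, (i < n)%nat /\ A i w) = fsum (fun i => Pr Ps (A i)) n.
Proof.
  intros HA D. induction n; simpl.
  - rewrite <- Pr_empty. apply Pr_ext. intros w; split; [intros [i [h _]]; lia|tauto].
  - rewrite <- IHn.
    rewrite <- Pr_add2; auto using meas_fin_union.
    + apply Pr_ext. intros w; split.
      * intros [i [h1 h2]]. destruct (Nat.eq_dec i n); [subst; auto|left; exists i; split; auto; lia].
      * intros [[i [h1 h2]]|h]; [exists i; split; auto; lia|exists n; auto].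
    + intros w [i [h1 h2]] h. apply (D i n w); auto; lia.
Qed.

Lemma fsum_le f g n : (forall i, (i < n)%nat -> f i <= g i) -> fsum f n <= fsum g n.
Proof. induction n; simpl; intros H; [lra|]. pose proof (H n ltac:(lia)). pose proof (IHn ltac:(intros; apply H; lia)). lra. Qed.

Lemma fsum_scal c f n : fsum (fun i => c * f i) n = c * fsum f n.
Proof. induction n; simpl; [ring|rewrite IHn; ring]. Qed.

End Basics.


Lemma nat_arch r : exists n : nat, r < INR n.
Proof.
  destruct (archimed (Rabs r)) as [H1 _].
  pose proof (Rabs_pos r).
  assert (Hz : (0 < up (Rabs r))%Z) by (apply lt_IZR; lra).
  exists (Z.to_nat (up (Rabs r))). rewrite INR_IZR_INZ, Z2Nat.id by lia.
  pose proof (RRle_abs r). lra.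
Qed.

Lemma Rdiv_le_0_compat a b : 0 <= a -> 0 < b -> 0 <= a / b.
Proof. intros; unfold Rdiv; apply Rmult_le_pos; auto; left; apply Rinv_0_lt_compat; auto. Qed.

Lemma rpred_ext (A B : R -> Prop) : (forall w, A w <-> B w) -> A = B.
Proof. intros H; apply functional_extensionality; intros w; apply propositional_extensionality; auto. Qed.

Lemma borel_ext A B : (forall x, A x <-> B x) -> borel A -> borel B.
Proof. intros H; rewrite (rpred_ext A B H); auto. Qed.

Lemma borel_le a : borel (fun x => x <= a).
Proof. intros S HS Hr; auto. Qed.

Lemma borel_compl B : borel B -> borel (fun x => ~ B x).
Proof. intros HB S HS Hr. pose proof HS as [_ [Hc _]]. apply Hc, HB; auto. Qed.

Lemma borel_union (B : nat -> R -> Prop) : (forall n, borel (B n)) -> borel (fun x => exists n, B n x).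
Proof. intros HB S HS Hr. pose proof HS as [_ [_ Hu]]. apply Hu. intros n; apply HB; auto. Qed.

Lemma borel_or A B : borel A -> borel B -> borel (fun x => A x \/ B x).
Proof.
  intros HA HB.
  apply (borel_ext (fun w => exists n:nat, (match n with O => A | _ => B end) w)).
  - intros w; split; [intros [[|n] H]; auto|intros [H|H]; [exists O|exists 1%nat]; auto].
  - apply borel_union; intros [|n]; auto.
Qed.

Lemma borel_and A B : borel A -> borel B -> borel (fun x => A x /\ B x).
Proof.
  intros HA HB.
  apply (borel_ext (fun w => ~ (~ A w \/ ~ B w))).
  - intros w; split; [intros H; split; apply NNPP; tauto|tauto].
  - apply borel_compl, borel_or; apply borel_compl; auto.
Qed.

Lemma borel_gt a : borel (fun x => a < x).
Proof. apply (borel_ext (fun x => ~ x <= a)); [intros; lra|apply borel_compl, borel_le]. Qed.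

Lemma borel_oc a b : borel (fun x => a < x <= b).
Proof. apply borel_and; [apply borel_gt|apply borel_le]. Qed.

Lemma borel_True : borel (fun _ => True).
Proof. intros S [H _] _; auto. Qed.

Section RV.
Variable Ps : prob_space.
Variables X Y : Omega Ps -> R.
Hypothesis HX : random_variable Ps X.
Hypothesis HY : random_variable Ps Y.
Hypothesis HXnn : forall w, 0 <= X w.
Hypothesis HYnn : forall w, 0 <= Y w.

Lemma meas_ext' A B : (forall w, A w <-> B w) -> meas Ps A -> meas Ps B.
Proof. intros H; replace B with A; auto. apply functional_extensionality; intros w; apply propositional_extensionality; auto. Qed.

Lemma meas_or' A B : meas Ps A -> meas Ps B -> meas Ps (fun w => A w \/ B w).
Proof.
  intros HA HB.
  apply (meas_ext' (fun w => exists n:nat, (match n with O => A | _ => B end) w)).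
  - intros w; split; [intros [[|n] H]; auto|intros [H|H]; [exists O|exists 1%nat]; auto].
  - apply meas_union; intros [|n]; auto.
Qed.

Lemma meas_and' A B : meas Ps A -> meas Ps B -> meas Ps (fun w => A w /\ B w).
Proof.
  intros HA HB.
  apply (meas_ext' (fun w => ~ (~ A w \/ ~ B w))).
  - intros w; split; [intros H; split; apply NNPP; tauto|tauto].
  - apply meas_compl, meas_or'; apply meas_compl; auto.
Qed.

Lemma meas_prod_gt r : meas Ps (fun w => r < X w * Y w).
Proof.
  destruct (Rlt_or_le r 0) as [Hr|Hr].
  { apply (meas_ext' (fun _ => True)); [|apply meas_full].
    intros w; split; auto; intros _. pose proof (Rmult_le_pos _ _ (HXnn w) (HYnn w)); lra. }
  set (q := fun n m : nat => INR (S m) / INR (S n)).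
  apply (meas_ext' (fun w => exists n, exists m, q n m < X w /\ r / q n m < Y w)).
  - intros w; split.
    + intros [n [m [h1 h2]]].
      assert (Hq : 0 < q n m) by (unfold q; apply Rdiv_lt_0_compat; apply lt_0_INR; lia).
      assert (0 <= r / q n m) by (apply Rdiv_le_0_compat; lra).
      apply Rle_lt_trans with (q n m * (r / q n m)).
      * right. field. lra.
      * apply Rmult_le_0_lt_compat; lra.
    + intros h.
      assert (HXp : 0 < X w).
      { destruct (HXnn w) as [h'|h']; auto. rewrite <- h' in h; lra. }
      assert (HYp : 0 < Y w).
      { destruct (HYnn w) as [h'|h']; auto. rewrite <- h' in h; lra. }
      assert (Hd : r / Y w < X w).
      { apply (Rmult_lt_reg_r (Y w)); auto. unfold Rdiv; rewrite Rmult_assoc, Rinv_l; lra. }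
      destruct (nat_arch (/ (X w - r / Y w))) as [n Hn0].
      assert (HN : 0 < INR (S n)) by (apply lt_0_INR; lia).
      assert (Hd0 : 0 < X w - r / Y w) by lra.
      assert (Hsmall : / INR (S n) < X w - r / Y w).
      { assert (Hi : 0 < / (X w - r / Y w)) by (apply Rinv_0_lt_compat; lra).
        assert (Hn1 : / (X w - r / Y w) < INR (S n)) by (rewrite S_INR; lra).
        rewrite <- (Rinv_inv (X w - r / Y w)). apply Rinv_lt_contravar; auto.
        apply Rmult_lt_0_compat; auto. }
      set (z := r / Y w * INR (S n)).
      assert (Hz0 : 0 <= z) by (unfold z; apply Rmult_le_pos; [apply Rdiv_le_0_compat|]; lra).
      destruct (archimed z) as [A1 A2].
      assert (Hup : (0 < up z)%Z) by (apply lt_IZR; lra).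
      exists n, (Z.to_nat (up z) - 1)%nat.
      assert (Eq : INR (S (Z.to_nat (up z) - 1)) = IZR (up z)).
      { rewrite INR_IZR_INZ. f_equal. rewrite Nat2Z.inj_succ, Nat2Z.inj_sub, Z2Nat.id; lia. }
      unfold q; rewrite Eq.
      assert (Hqlt : r / Y w < IZR (up z) / INR (S n)).
      { apply (Rmult_lt_reg_r (INR (S n))); auto. unfold Rdiv at 2. rewrite Rmult_assoc, Rinv_l by lra.
        fold z; lra. }
      split.
      * apply Rle_lt_trans with (r / Y w + / INR (S n)); [|lra].
        apply (Rmult_le_reg_r (INR (S n))); auto. unfold Rdiv at 1. rewrite Rmult_assoc, Rinv_l by lra.
        rewrite Rmult_plus_distr_r, Rinv_l by lra. fold z. lra.
      * assert (0 < IZR (up z) / INR (S n)) by (apply Rdiv_lt_0_compat; auto; apply IZR_lt; lia).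
        apply (Rmult_lt_reg_r (IZR (up z) / INR (S n))); auto.
        unfold Rdiv at 1. rewrite Rmult_assoc, Rinv_l by lra. rewrite Rmult_1_r.
        rewrite Rmult_comm. apply (Rmult_lt_reg_r (/ Y w)). apply Rinv_0_lt_compat; auto.
        rewrite Rmult_assoc, Rinv_r by lra. rewrite Rmult_1_r. exact Hqlt.
  - apply meas_union; intros n. apply meas_union; intros m.
    apply meas_and'; [apply (HX (fun x => q n m < x))|apply (HY (fun x => r / q n m < x))]; apply borel_gt.
Qed.

Lemma meas_prod_le r : meas Ps (fun w => X w * Y w <= r).
Proof.
  apply (meas_ext' (fun w => ~ (r < X w * Y w))); [intros; lra|]. apply meas_compl, meas_prod_gt.
Qed.
End RV.


Section Distr.
Variable Ps : prob_space.
Variable Z : Omega Ps -> R.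
Hypothesis HZle : forall r, meas Ps (fun w => Z w <= r).

Lemma HZgt r : meas Ps (fun w => r < Z w).
Proof. apply (meas_ext Ps (fun w => ~ Z w <= r)); [intros; lra|apply meas_compl, HZle]. Qed.

Lemma HZoc a b : meas Ps (fun w => a < Z w <= b).
Proof. apply meas_and; [apply HZgt|apply HZle]. Qed.

Lemma tail_eq r : tail (distr Ps Z) r = Pr Ps (fun w => r < Z w).
Proof. unfold tail, distr. rewrite <- Pr_compl by auto. apply Pr_ext; intros; lra. Qed.

Lemma tail_nonneg r : 0 <= tail (distr Ps Z) r.
Proof. rewrite tail_eq. apply Pr_nonneg, HZgt. Qed.

Lemma tail_mono r s : r <= s -> tail (distr Ps Z) s <= tail (distr Ps Z) r.
Proof. intros H; rewrite !tail_eq. apply Pr_mono; try apply HZgt. intros; lra. Qed.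

Lemma Pr_oc a b : a <= b -> Pr Ps (fun w => a < Z w <= b) = tail (distr Ps Z) a - tail (distr Ps Z) b.
Proof.
  intros H; rewrite !tail_eq.
  rewrite (Pr_ext Ps (fun w => a < Z w) (fun w => (a < Z w <= b) \/ b < Z w)) by (intros; lra).
  rewrite Pr_add2; try apply HZoc; try apply HZgt. ring. intros; lra.
Qed.

Lemma distr_mono r s : r <= s -> distr Ps Z r <= distr Ps Z s.
Proof. intros H; pose proof (tail_mono r s H); unfold tail in *; lra. Qed.
End Distr.

Lemma rv_le Ps X : random_variable Ps X -> forall r, meas Ps (fun w => X w <= r).
Proof. intros H r; apply (H (fun x => x <= r)), borel_le. Qed.

Section Tails.
Variable T : R -> R.
Hypothesis Tmono : forall r s, r <= s -> T s <= T r.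
Hypothesis Tnn : forall r, 0 <= T r.
Hypothesis Has : asymp_eq (fun x => T (x - / x)) T.

Lemma T_pos : forall r, 0 < T r.
Proof.
  intros r. destruct (Tnn r) as [h|h]; auto. exfalso.
  destruct (Has (1/2) ltac:(lra)) as [M HM].
  specialize (HM (Rmax M r) (Rmax_l _ _)).
  assert (T (Rmax M r) = 0). { pose proof (Tmono r (Rmax M r) (Rmax_r _ _)). pose proof (Tnn (Rmax M r)). lra. }
  rewrite H in HM. unfold Rdiv in HM. rewrite Rinv_0, Rmult_0_r in HM.
  rewrite Rabs_left in HM by lra. lra.
Qed.

Lemma shift_nat : forall n eps, 0 < eps -> exists M, 1 <= M /\
  forall y, M <= y -> T (y - INR n / y) <= (1 + eps) * T y.
Proof.
  induction n; intros eps Heps.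
  - exists 1; split; [lra|]. intros y Hy. simpl. unfold Rdiv; rewrite Rmult_0_l, Rminus_0_r.
    pose proof (Tnn y); nra.
  - set (e := Rmin 1 eps / 3).
    assert (He : 0 < e) by (unfold e, Rmin; destruct Rle_dec; lra).
    assert (He2 : (1 + e) * (1 + e) <= 1 + eps).
    { assert (e <= 1/3) by (unfold e; pose proof (Rmin_l 1 eps); lra). assert (3*e <= eps) by (unfold e; pose proof (Rmin_r 1 eps); lra). nra. }
    destruct (IHn e He) as [Mn [HMn1 HMn]].
    destruct (Has e He) as [M1 HM1].
    set (M := Rmax Mn (Rmax 1 M1 + INR n)).
    exists M. split. { unfold M. pose proof (Rmax_l Mn (Rmax 1 M1 + INR n)). lra. }
    intros y Hy.
    assert (Hy1 : Mn <= y) by (pose proof (Rmax_l Mn (Rmax 1 M1 + INR n)); unfold M in Hy; lra).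
    assert (Hy2 : Rmax 1 M1 + INR n <= y) by (pose proof (Rmax_r Mn (Rmax 1 M1 + INR n)); unfold M in Hy; lra).
    pose proof (Rmax_l 1 M1); pose proof (Rmax_r 1 M1). pose proof (pos_INR n).
    set (z := y - INR n / y).
    assert (Hny : INR n / y <= INR n).
    { unfold Rdiv. rewrite <- (Rmult_1_r (INR n)) at 2. apply Rmult_le_compat_l; auto.
      rewrite <- Rinv_1. apply Rinv_le_contravar; lra. }
    assert (Hny0 : 0 <= INR n / y) by (apply Rdiv_le_0_compat; lra).
    assert (Hz1 : M1 <= z) by (unfold z; lra).
    assert (Hz0 : 1 <= z) by (unfold z; lra).
    assert (Hzy : z <= y) by (unfold z; lra).
    assert (Step1 : T (y - INR (S n) / y) <= T (z - / z)).
    { apply Tmono. assert (/ y <= / z) by (apply Rinv_le_contravar; lra).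
      unfold z in *. rewrite S_INR. unfold Rdiv in *. lra. }
    assert (Step2 : T (z - / z) <= (1 + e) * T z).
    { specialize (HM1 z Hz1). pose proof (T_pos z). apply Rabs_def2 in HM1 as [A _].
      apply (Rmult_lt_compat_r (T z)) in A; auto. unfold Rdiv in A.
      rewrite Rmult_minus_distr_r, Rmult_assoc, Rinv_l in A by lra. lra. }
    assert (Step3 : T z <= (1 + e) * T y) by (apply HMn; auto).
    pose proof (T_pos y). pose proof (Tnn z). nra.
Qed.

Lemma shift_real : forall k eps, 0 <= k -> 0 < eps -> exists M, 1 <= M /\
  forall y, M <= y -> T (y - k / y) <= (1 + eps) * T y.
Proof.
  intros k eps Hk He. destruct (nat_arch k) as [n Hn].
  destruct (shift_nat n eps He) as [M [HM1 HM]]. exists M; split; auto.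
  intros y Hy. eapply Rle_trans; [|apply HM; auto]. apply Tmono.
  unfold Rdiv. assert (0 < / y) by (apply Rinv_0_lt_compat; lra). nra.
Qed.
End Tails.


Lemma div_le a x y : 0 < a -> a * y <= x -> y <= x / a.
Proof. intros Ha H. apply (Rmult_le_reg_l a); auto. unfold Rdiv. replace (a * (x * / a)) with x by (field; lra). lra. Qed.

Lemma div_lt a x y : 0 < a -> x < a * y -> x / a < y.
Proof. intros Ha H. apply (Rmult_lt_reg_l a); auto. unfold Rdiv. replace (a * (x * / a)) with x by (field; lra). lra. Qed.

Lemma div_anti x a b : 0 <= x -> 0 < a -> a <= b -> x / b <= x / a.
Proof. intros Hx Ha Hab. unfold Rdiv. apply Rmult_le_compat_l; auto. apply Rinv_le_contravar; auto. Qed.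

Lemma mul_div a x : 0 < a -> a * (x / a) = x.
Proof. intros; field; lra. Qed.

Lemma s_mono (s : nat -> R) : (forall i, s i <= s (S i)) -> forall i j, (i <= j)%nat -> s i <= s j.
Proof. intros H i j Hij. induction Hij; [lra|]. specialize (H m). lra. Qed.

Lemma cell_find (s : nat -> R) N v : (forall i, s i <= s (S i)) -> s 0%nat < v <= s N ->
  exists i, (i < N)%nat /\ s i < v <= s (S i).
Proof.
  intros Hs. induction N; intros Hv; [lra|].
  destruct (Rle_or_lt v (s N)) as [h|h].
  - destruct IHN as [i [h1 h2]]; [lra|]. exists i; split; auto; lia.
  - exists N; split; [lia|lra].
Qed.

Lemma cell_disj (s : nat -> R) i j v : (forall i, s i <= s (S i)) -> i <> j ->
  s i < v <= s (S i) -> s j < v <= s (S j) -> False.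
Proof.
  intros Hs Hij Hi Hj. destruct (Nat.lt_ge_cases i j) as [h|h].
  - pose proof (s_mono s Hs (S i) j h). lra.
  - assert (S j <= i)%nat by lia. pose proof (s_mono s Hs (S j) i H). lra.
Qed.

Section Cells.
Variable Ps : prob_space.
Variables X Y : Omega Ps -> R.
Hypothesis HXrv : random_variable Ps X.
Hypothesis HYrv : random_variable Ps Y.
Hypothesis Hind : independent Ps X Y.
Hypothesis HXnn : forall w, 0 <= X w.
Hypothesis HYnn : forall w, 0 <= Y w.

Lemma mX B : borel B -> meas Ps (fun w => B (X w)).
Proof. intros; apply HXrv; auto. Qed.
Lemma mY B : borel B -> meas Ps (fun w => B (Y w)).
Proof. intros; apply HYrv; auto. Qed.

Lemma meas_E x t : meas Ps (fun w => x - t < X w * Y w <= x).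
Proof. apply meas_and; [apply meas_prod_gt|apply meas_prod_le]; auto. Qed.

Lemma cell_bound (s : nat -> R) N x t :
  (forall i, s i <= s (S i)) -> 0 < s 0%nat -> 0 <= t -> 0 <= x - t ->
  Pr Ps (fun w => x - t < X w * Y w <= x /\ s 0%nat < X w <= s N) <=
  fsum (fun i => Pr Ps (fun w => s i < X w <= s (S i)) *
                 Pr Ps (fun w => (x - t) / s (S i) < Y w <= x / s i)) N.
Proof.
  intros Hs Hs0 Ht Hxt.
  assert (Hpos : forall i, 0 < s i) by (intros i; pose proof (s_mono s Hs 0 i ltac:(lia)); lra).
  set (F := fun i w => s i < X w <= s (S i) /\ (x - t) / s (S i) < Y w <= x / s i).
  assert (HF : forall i, meas Ps (F i)).
  { intros i. apply meas_and; [apply (mX (fun v => s i < v <= s (S i)))|apply (mY (fun v => (x - t) / s (S i) < v <= x / s i))]; apply borel_oc. }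
  apply Rle_trans with (Pr Ps (fun w => exists i, (i < N)%nat /\ F i w)).
  - apply Pr_mono.
    + apply meas_and; [apply meas_E|apply (mX (fun v => s 0%nat < v <= s N)), borel_oc].
    + apply meas_fin_union; auto.
    + intros w [[h1 h2] h3]. destruct (cell_find s N (X w) Hs h3) as [i [hi [hc1 hc2]]].
      exists i; split; auto. unfold F; split; [split; auto|].
      pose proof (Hpos i); pose proof (Hpos (S i)).
      split.
      * apply Rle_lt_trans with ((x - t) / X w).
        -- apply div_anti; auto; lra.
        -- apply div_lt; lra.
      * apply Rle_trans with (x / X w).
        -- apply div_le; lra.
        -- apply div_anti; lra.
  - rewrite Pr_fin_union; auto.
    + right. f_equal. apply functional_extensionality; intros i. unfold F.
      apply (Hind (fun v => s i < v <= s (S i)) (fun v => (x - t) / s (S i) < v <= x / s i)); apply borel_oc.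
    + intros i j w Hij [h1 _] [h2 _]. apply (cell_disj s i j (X w)); auto.
Qed.

Lemma cell_lower (s : nat -> R) N x :
  (forall i, s i <= s (S i)) -> 0 < s 0%nat -> 0 <= x ->
  fsum (fun i => Pr Ps (fun w => s i < X w <= s (S i)) * Pr Ps (fun w => x / s i < Y w)) N <=
  Pr Ps (fun w => x < X w * Y w).
Proof.
  intros Hs Hs0 Hx.
  assert (Hpos : forall i, 0 < s i) by (intros i; pose proof (s_mono s Hs 0 i ltac:(lia)); lra).
  set (G := fun i w => s i < X w <= s (S i) /\ x / s i < Y w).
  assert (HG : forall i, meas Ps (G i)).
  { intros i. apply meas_and; [apply (mX (fun v => s i < v <= s (S i)))|apply (mY (fun v => x / s i < v))]; [apply borel_oc|apply borel_gt]. }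
  replace (fsum _ N) with (Pr Ps (fun w => exists i, (i < N)%nat /\ G i w)).
  - apply Pr_mono; [apply meas_fin_union; auto|apply meas_prod_gt; auto|].
    intros w [i [_ [[h1 h2] h3]]]. pose proof (Hpos i).
    assert (0 <= x / s i) by (apply Rdiv_le_0_compat; auto).
    apply Rle_lt_trans with (s i * (x / s i)); [rewrite mul_div; lra|].
    apply Rle_lt_trans with (s i * Y w); [apply Rmult_le_compat_l; lra|].
    apply Rmult_lt_compat_r; lra.
  - rewrite Pr_fin_union; auto.
    + f_equal. apply functional_extensionality; intros i. unfold G.
      apply (Hind (fun v => s i < v <= s (S i)) (fun v => x / s i < v)); [apply borel_oc|apply borel_gt].
    + intros i j w Hij [h1 _] [h2 _]. apply (cell_disj s i j (X w)); auto.
Qed.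

Lemma cell_sumX (s : nat -> R) N :
  (forall i, s i <= s (S i)) ->
  fsum (fun i => Pr Ps (fun w => s i < X w <= s (S i))) N <= Pr Ps (fun w => s 0%nat < X w).
Proof.
  intros Hs. set (G := fun i w => s i < X w <= s (S i)).
  assert (HG : forall i, meas Ps (G i)) by (intros i; apply (mX (fun v => s i < v <= s (S i))), borel_oc).
  change (fsum (fun i => Pr Ps (G i)) N <= Pr Ps (fun w => s 0%nat < X w)).
  rewrite <- Pr_fin_union; auto.
  - apply Pr_mono; [apply meas_fin_union; auto|apply (mX (fun v => s 0%nat < v)), borel_gt|].
    intros w [i [_ [h1 h2]]]. pose proof (s_mono s Hs 0 i ltac:(lia)). lra.
  - intros i j w Hij h1 h2. apply (cell_disj s i j (X w)); auto.
Qed.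

Lemma rect_R1 x t K : 0 < K -> 0 <= x ->
  Pr Ps (fun w => x - t < X w * Y w <= x /\ K < X w) <=
  Pr Ps (fun w => K < X w) * Pr Ps (fun w => Y w <= x / K).
Proof.
  intros HK Hx. rewrite <- (Hind (fun v => K < v) (fun v => v <= x / K)) by (apply borel_gt || apply borel_le).
  apply Pr_mono.
  - apply meas_and; [apply meas_E|apply (mX (fun v => K < v)), borel_gt].
  - apply meas_and; [apply (mX (fun v => K < v)), borel_gt|apply (mY (fun v => v <= x / K)), borel_le].
  - intros w [[h1 h2] h3]. split; auto. apply Rle_trans with (x / X w).
    + apply div_le; lra.
    + apply div_anti; lra.
Qed.
End Cells.


Lemma frac_le p q r u : 0 < q -> 0 < u -> p * u <= r * q -> p / q <= r / u.
Proof.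
  intros Hq Hu H.
  assert (0 <= (r * q - p * u) / (q * u)) by (apply Rdiv_le_0_compat; [lra|apply Rmult_lt_0_compat; auto]).
  replace (r / u) with (p / q + (r * q - p * u) / (q * u)) by (field; lra). lra.
Qed.

Lemma shift_ineq x t s s' h : 0 < s -> 0 <= h -> s <= s' -> s' <= s + h -> 0 <= t -> t <= x ->
  x / s - (x * h + t * s) / (s * s) <= (x - t) / s'.
Proof.
  intros Hs Hh H1 H2 Ht Htx.
  apply Rle_trans with ((x - t) / (s + h)).
  - replace (x / s - (x * h + t * s) / (s * s)) with ((x * s - x * h - t * s) / (s * s)) by (field; lra).
    apply frac_le; [nra|lra|]. assert (0 <= x * (h * h)) by (apply Rmult_le_pos; [lra|nra]). assert (0 <= t * (s * h)) by (apply Rmult_le_pos; nra). nra.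
  - apply div_anti; lra.
Qed.

Lemma grid A B h : A <= B -> 0 < h -> exists (s : nat -> R) (N : nat),
  s 0%nat = A /\ s N = B /\ (forall i, s i <= s (S i)) /\ (forall i, s (S i) <= s i + h) /\
  (forall i, (i <= N)%nat -> A <= s i <= B).
Proof.
  intros HAB Hh. destruct (nat_arch ((B - A) / h)) as [n Hn].
  set (N := S n). assert (HN : 0 < INR N) by (apply lt_0_INR; unfold N; lia).
  set (d := (B - A) / INR N).
  assert (Hd0 : 0 <= d) by (apply Rdiv_le_0_compat; lra).
  assert (Hdh : d <= h).
  { unfold d. apply Rle_trans with ((B - A) / ((B - A) / h)).
    - destruct (Req_dec (B - A) 0) as [E|E].
      + rewrite E; unfold Rdiv; rewrite !Rmult_0_l; lra.
      + apply div_anti; [lra| |].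
        * apply Rdiv_lt_0_compat; lra.
        * unfold N; rewrite S_INR; lra.
    - destruct (Req_dec (B - A) 0) as [E|E].
      + rewrite E in *. unfold Rdiv; rewrite !Rmult_0_l; lra.
      + right; field; lra. }
  exists (fun i => A + INR i * d), N. repeat split.
  - simpl; ring.
  - unfold d; field; lra.
  - intros j; rewrite S_INR; nra.
  - intros j; rewrite S_INR; lra.
  - pose proof (pos_INR i); nra.
  - match goal with H : (i <= N)%nat |- _ => apply le_INR in H end.
    assert (INR i * d <= INR N * d) by nra.
    assert (INR N * d = B - A) by (unfold d; field; lra). lra.
Qed.

Lemma distr0 Ps Y : random_variable Ps Y -> (forall w, 0 <= Y w) -> continuity_pt (distr Ps Y) 0 -> distr Ps Y 0 = 0.
Proof.
  intros Hrv Hnn Hc.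
  assert (Hneg : forall u, u < 0 -> distr Ps Y u = 0).
  { intros u Hu. unfold distr. rewrite <- (Pr_empty Ps). apply Pr_ext. intros w; pose proof (Hnn w); split; lra. }
  unfold continuity_pt, continue_in, limit1_in, limit_in in Hc. simpl in Hc. unfold Rdist, D_x, no_cond in Hc.
  apply Rle_antisym.
  - apply Rnot_lt_le; intros Hp.
    destruct (Hc (distr Ps Y 0) Hp) as [al [Hal H]].
    assert (H0 : Rabs (- (al / 2) - 0) < al).
    { rewrite Rabs_left by lra. lra. }
    assert (H1 : 0 <> - (al / 2)) by lra. specialize (H _ (conj (conj I H1) H0)).
    rewrite Hneg in H by lra.
    rewrite Rabs_left in H by lra. lra.
  - unfold distr. apply Pr_nonneg. apply (rv_le Ps Y Hrv 0).
Qed.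


Lemma fsum_scal2 f g c n : fsum (fun i => f i * (c * g i)) n = c * fsum (fun i => f i * g i) n.
Proof. induction n; simpl; [ring|rewrite IHn; ring]. Qed.

Lemma fsum_scalr f c n : fsum (fun i => f i * c) n = c * fsum f n.
Proof. induction n; simpl; [ring|rewrite IHn; ring]. Qed.

Section Half.
Variable Ps : prob_space.
Variables X Y : Omega Ps -> R.
Hypothesis HXrv : random_variable Ps X.
Hypothesis HYrv : random_variable Ps Y.
Hypothesis Hind : independent Ps X Y.
Hypothesis HXnn : forall w, 0 <= X w.
Hypothesis HYnn : forall w, 0 <= Y w.
Hypothesis HG : asymp_eq (fun x => tail (distr Ps Y) (x - / x)) (tail (distr Ps Y)).

Lemma R3 t eps : 0 < t -> 0 < eps -> exists Z0, 1 <= Z0 /\ forall x, Rmax (2*t) (Rmax (t+1) (Z0*Z0)) <= x ->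
  Pr Ps (fun w => x - t < X w * Y w <= x /\ sqrt (x - t) < X w <= x / Z0) <=
  eps * tail (distr Ps (fun w => X w * Y w)) x.
Proof.
  intros Ht He.
  set (TG := tail (distr Ps Y)).
  assert (Tmono : forall r s, r <= s -> TG s <= TG r) by (apply tail_mono, rv_le; auto).
  assert (Tnn : forall r, 0 <= TG r) by (apply tail_nonneg, rv_le; auto).
  set (k := 2 * t + 2).
  destruct (shift_real TG Tmono Tnn HG k eps ltac:(unfold k; lra) He) as [Z0 [HZ1 HZ]].
  exists Z0; split; auto. intros x Hx.
  pose proof (Rmax_l (2*t) (Rmax (t+1) (Z0*Z0))). pose proof (Rmax_r (2*t) (Rmax (t+1) (Z0*Z0))).
  pose proof (Rmax_l (t+1) (Z0*Z0)). pose proof (Rmax_r (t+1) (Z0*Z0)).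
  assert (Hx2 : 2 * t <= x) by lra. assert (Hx1 : t + 1 <= x) by lra. assert (HxZ : Z0 * Z0 <= x) by lra.
  clear H H0 H1 H2.
  assert (Hx0 : 1 <= x) by nra.
  set (c := sqrt (x - t)).
  assert (Hcc : c * c = x - t) by (apply sqrt_sqrt; lra).
  assert (Hc0 : 0 <= c) by (apply sqrt_pos).
  assert (Hc1 : 1 <= c) by nra.
  assert (HB : c <= x / Z0).
  { assert (x <= x / Z0 * (x / Z0)).
    { replace (x / Z0 * (x / Z0)) with (x * (x / (Z0 * Z0))) by (field; lra).
      assert (1 <= x / (Z0 * Z0)).
      { apply div_le; nra. }
      nra. }
    assert (0 <= x / Z0) by (apply Rdiv_le_0_compat; lra). nra. }
  set (h := / (x * x)).
  assert (Hh : 0 < h) by (unfold h; apply Rinv_0_lt_compat; nra).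
  destruct (grid c (x / Z0) h HB Hh) as [s [N [Hs0 [HsN [Hsm [Hsh Hsr]]]]]].
  rewrite <- Hs0, <- HsN.
  eapply Rle_trans.
  { apply cell_bound; auto; lra. }
  apply Rle_trans with (fsum (fun i => Pr Ps (fun w => s i < X w <= s (S i)) * (eps * Pr Ps (fun w => x / s i < Y w))) N).
  - apply fsum_le. intros i Hi.
    apply Rmult_le_compat_l; [apply Pr_nonneg, (mX Ps X HXrv (fun v => s i < v <= s (S i))), borel_oc|].
    destruct (Hsr i ltac:(lia)) as [Hsi1 Hsi2].
    destruct (Hsr (S i) ltac:(lia)) as [Hsi3 Hsi4].
    set (si := s i) in *. set (si' := s (S i)) in *.
    assert (Hsh' : si' <= si + h) by apply Hsh.
    assert (Hsm' : si <= si') by apply Hsm.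
    set (y := x / si).
    assert (Hsi0 : 0 < si) by lra.
    assert (Hy : Z0 <= y).
    { unfold y. apply Rle_trans with (x / (x / Z0)); [right; field; lra|]. apply div_anti; lra. }
    assert (Hy0 : 0 < y) by lra.
    assert (Hky : 0 <= k / y) by (apply Rdiv_le_0_compat; [unfold k|]; lra).
    assert (Key : y - k / y <= (x - t) / si').
    { eapply Rle_trans; [|apply (shift_ineq x t si si' h); auto; lra].
      unfold y. assert ((x * h + t * si) / (si * si) <= k / (x / si)); [|lra].
      replace (k / (x / si)) with (k * si / x) by (field; lra).
      apply frac_le; [nra|lra|].
      replace ((x * h + t * si) * x) with (1 + t * si * x) by (unfold h; field; lra).
      assert (Hs2 : x / 2 <= si * si) by nra.
      unfold k. assert (0 <= t * si * (si * si - x / 2)) by (apply Rmult_le_pos; nra).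
      assert (1 <= si * (si * si)) by nra. nra. }
    eapply Rle_trans.
    { apply (Pr_mono Ps _ (fun w => y - k / y < Y w <= y)).
      - apply (mY Ps Y HYrv (fun v => (x - t) / si' < v <= x / si)), borel_oc.
      - apply (mY Ps Y HYrv (fun v => y - k / y < v <= y)), borel_oc.
      - intros w [h1 h2]; unfold y in *; lra. }
    rewrite Pr_oc by (try apply rv_le; auto; lra).
    rewrite <- (tail_eq Ps Y (rv_le Ps Y HYrv)). fold TG. fold y.
    pose proof (HZ y Hy). lra.
  - rewrite fsum_scal2. apply Rmult_le_compat_l; [lra|].
    rewrite (tail_eq Ps (fun w => X w * Y w)) by (apply meas_prod_le; auto).
    apply cell_lower; auto; lra.
Qed.

Hypothesis HGc : continuity (distr Ps Y).

Lemma R2R1 t Z0 eps' : 0 < t -> 1 <= Z0 -> 0 < eps' -> exists K M, 0 < K /\ / Z0 <= K /\ forall x, M <= x ->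
  Pr Ps (fun w => x - t < X w * Y w <= x /\ x / Z0 < X w <= K * x) <= eps' * Pr Ps (fun w => x / Z0 < X w) /\
  Pr Ps (fun w => x - t < X w * Y w <= x /\ K * x < X w) <= eps' * Pr Ps (fun w => x / Z0 < X w).
Proof.
  intros Ht HZ He.
  set (Gd := distr Ps Y).
  assert (UC : uniform_continuity Gd (fun c => -1 <= c <= Z0 + 1)).
  { apply Heine; [apply compact_P3|intros; apply HGc]. }
  destruct (UC (mkposreal eps' He)) as [du Hdu]. simpl in Hdu.
  pose proof (cond_pos du) as Hdu0.
  assert (HG0 : Gd 0 = 0) by (apply distr0; auto).
  set (d := Rmin du 1 / 4).
  assert (Hd0 : 0 < d) by (unfold d, Rmin; destruct Rle_dec; lra).
  assert (Hd1 : 2 * d < du) by (unfold d; pose proof (Rmin_l du 1); lra).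
  assert (Hd2 : d <= 1/4) by (unfold d; pose proof (Rmin_r du 1); lra).
  assert (HZ0 : 0 < Z0) by lra.
  set (K := Rmax (2 / du) (/ Z0)).
  assert (HK1 : 2 / du <= K) by apply Rmax_l. assert (HK2 : / Z0 <= K) by apply Rmax_r.
  assert (HK0 : 0 < K) by (pose proof (Rinv_0_lt_compat Z0 HZ0); lra).
  exists K, (Rmax (t * Z0 / d) (t + 1)). split; [auto|split; [auto|]].
  intros x Hx. pose proof (Rmax_l (t * Z0 / d) (t + 1)). pose proof (Rmax_r (t * Z0 / d) (t + 1)).
  assert (Hx1 : t * Z0 / d <= x) by lra. assert (Hx2 : t + 1 <= x) by lra. clear H H0.
  set (A := x / Z0).
  assert (HA0 : 0 < A) by (unfold A; apply Rdiv_lt_0_compat; lra).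
  assert (HtA : t <= d * A).
  { unfold A. replace (d * (x / Z0)) with (x / (Z0 / d)) by (field; lra).
    apply div_le; [apply Rdiv_lt_0_compat; lra|]. replace (Z0 / d * t) with (t * Z0 / d) by (field; lra). lra. }
  assert (HAK : A <= K * x).
  { unfold A. unfold Rdiv. rewrite Rmult_comm. apply Rmult_le_compat_r; lra. }
  assert (Hprob : Pr Ps (fun w => A < X w) = tail (distr Ps X) A) by (rewrite tail_eq; auto; apply rv_le; auto).
  split.
  - set (h := d * (A * A) / x).
    assert (Hh : 0 < h) by (unfold h; apply Rdiv_lt_0_compat; [apply Rmult_lt_0_compat; nra|lra]).
    destruct (grid A (K * x) h HAK Hh) as [s [N [Hs0 [HsN [Hsm [Hsh Hsr]]]]]].
    rewrite <- Hs0, <- HsN.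
    eapply Rle_trans.
    { apply cell_bound; auto; lra. }
    apply Rle_trans with (fsum (fun i => Pr Ps (fun w => s i < X w <= s (S i)) * eps') N).
    + apply fsum_le. intros i Hi.
      apply Rmult_le_compat_l; [apply Pr_nonneg, (mX Ps X HXrv (fun v => s i < v <= s (S i))), borel_oc|].
      destruct (Hsr i ltac:(lia)) as [Hsi1 Hsi2].
      destruct (Hsr (S i) ltac:(lia)) as [Hsi3 Hsi4].
      set (si := s i) in *. set (si' := s (S i)) in *.
      assert (Hsh' : si' <= si + h) by apply Hsh.
      assert (Hsm' : si <= si') by apply Hsm.
      set (y := x / si).
      assert (Hsi0 : 0 < si) by lra.
      assert (Hy : y <= Z0).
      { unfold y. apply Rle_trans with (x / A); [apply div_anti; lra|unfold A; right; field; lra]. }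
      assert (Hy0 : 0 < y) by (unfold y; apply Rdiv_lt_0_compat; lra).
      assert (Key : y - 2 * d <= (x - t) / si').
      { eapply Rle_trans; [|apply (shift_ineq x t si si' h); auto; lra].
        unfold y. assert ((x * h + t * si) / (si * si) <= (2 * d) / 1); [|lra].
        apply frac_le; [nra|lra|].
        replace (x * h) with (d * (A * A)) by (unfold h; field; lra).
        assert (A * A <= si * si) by nra.
        assert (t * si <= d * A * si) by nra.
        assert (0 <= (si - A) * (d * si)) by (apply Rmult_le_pos; nra). nra. }
      eapply Rle_trans.
      { apply (Pr_mono Ps _ (fun w => y - 2 * d < Y w <= y)).
        - apply (mY Ps Y HYrv (fun v => (x - t) / si' < v <= x / si)), borel_oc.
        - apply (mY Ps Y HYrv (fun v => y - 2 * d < v <= y)), borel_oc.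
        - intros w [h1 h2]; unfold y in *; lra. }
      rewrite Pr_oc by (try apply rv_le; auto; lra).
      unfold tail. fold Gd.
      assert (Rabs (Gd y - Gd (y - 2 * d)) < eps').
      { apply Hdu; try lra. replace (y - (y - 2 * d)) with (2 * d) by ring. rewrite Rabs_right; lra. }
      apply Rabs_def2 in H. lra.
    + rewrite fsum_scalr. apply Rmult_le_compat_l; [lra|]. apply cell_sumX; auto.
  - eapply Rle_trans; [apply rect_R1; auto; try lra; nra|].
    replace (x / (K * x)) with (/ K) by (field; lra).
    assert (HIK : / K <= du / 2).
    { replace (du / 2) with (/ (2 / du)) by (field; lra). apply Rinv_le_contravar; auto.
      apply Rdiv_lt_0_compat; lra. }
    assert (HIK0 : 0 < / K) by (apply Rinv_0_lt_compat; lra).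
    assert (HIKZ : / K <= Z0).
    { rewrite <- (Rinv_inv Z0). apply Rinv_le_contravar; auto. apply Rinv_0_lt_compat; lra. }
    assert (Hg : Pr Ps (fun w => Y w <= / K) <= eps').
    { change (Gd (/ K) <= eps').
      assert (Rabs (Gd (/ K) - Gd 0) < eps').
      { apply Hdu; try lra. rewrite Rminus_0_r, Rabs_right; lra. }
      rewrite HG0 in H. apply Rabs_def2 in H. lra. }
    rewrite (Rmult_comm eps'). apply Rmult_le_compat.
    + apply Pr_nonneg, (mX Ps X HXrv (fun v => K * x < v)), borel_gt.
    + apply Pr_nonneg, rv_le; auto.
    + apply Pr_mono; [apply (mX Ps X HXrv (fun v => K * x < v)), borel_gt|apply (mX Ps X HXrv (fun v => A < v)), borel_gt|].
      intros w; lra.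
    + auto.
Qed.

Hypothesis HO : forall Z0, 1 <= Z0 -> exists C M, 0 < C /\ forall x, M <= x ->
  tail (distr Ps X) (x / Z0) <= C * tail (distr Ps (fun w => X w * Y w)) x.

Lemma half t eta : 0 < t -> 0 < eta -> exists M, forall x, M <= x ->
  Pr Ps (fun w => x - t < X w * Y w <= x /\ sqrt (x - t) < X w) <=
  eta * tail (distr Ps (fun w => X w * Y w)) x.
Proof.
  intros Ht He.
  destruct (R3 t (eta / 3) Ht ltac:(lra)) as [Z0 [HZ H3]].
  destruct (HO Z0 HZ) as [C [M1 [HC HCb]]].
  destruct (R2R1 t Z0 (eta / (3 * C)) Ht HZ) as [K [M2 [HK0 [HK H21]]]].
  { apply Rdiv_lt_0_compat; lra. }
  set (M0 := Rmax (2*t) (Rmax (t+1) (Z0*Z0))).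
  exists (Rmax M0 (Rmax M1 (Rmax M2 1))). intros x Hx.
  pose proof (Rmax_l M0 (Rmax M1 (Rmax M2 1))). pose proof (Rmax_r M0 (Rmax M1 (Rmax M2 1))).
  pose proof (Rmax_l M1 (Rmax M2 1)). pose proof (Rmax_r M1 (Rmax M2 1)).
  pose proof (Rmax_l M2 1). pose proof (Rmax_r M2 1).
  specialize (H3 x ltac:(unfold M0 in *; lra)).
  specialize (HCb x ltac:(lra)).
  destruct (H21 x ltac:(lra)) as [HR2 HR1].
  set (A := x / Z0) in *. set (c := sqrt (x - t)) in *.
  set (E := fun w => x - t < X w * Y w <= x).
  assert (mE : meas Ps E) by (apply meas_E; auto).
  assert (m3 : meas Ps (fun w => E w /\ c < X w <= A)) by (apply meas_and; auto; apply (mX Ps X HXrv (fun v => c < v <= A)), borel_oc).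
  assert (m2 : meas Ps (fun w => E w /\ A < X w <= K * x)) by (apply meas_and; auto; apply (mX Ps X HXrv (fun v => A < v <= K * x)), borel_oc).
  assert (m1 : meas Ps (fun w => E w /\ K * x < X w)) by (apply meas_and; auto; apply (mX Ps X HXrv (fun v => K * x < v)), borel_gt).
  eapply Rle_trans.
  { apply (Pr_mono Ps _ (fun w => ((E w /\ c < X w <= A) \/ (E w /\ A < X w <= K * x)) \/ (E w /\ K * x < X w))).
    - apply meas_and; auto. apply (mX Ps X HXrv (fun v => c < v)), borel_gt.
    - apply meas_or; auto. apply meas_or; auto.
    - intros w [hE hc]. fold (E w) in hE. destruct (Rle_or_lt (X w) A); [left; left; auto|].
      destruct (Rle_or_lt (X w) (K * x)); [left; right; auto|right; auto]. }
  eapply Rle_trans; [apply Pr_sub; auto; apply meas_or; auto|].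
  pose proof (Pr_sub Ps _ _ m3 m2).
  assert (Hsum : Pr Ps (fun w => E w /\ A < X w <= K * x) + Pr Ps (fun w => E w /\ K * x < X w)
     <= 2 * (eta / (3 * C)) * Pr Ps (fun w => A < X w)) by (unfold E; lra).
  rewrite (tail_eq Ps X (rv_le Ps X HXrv)) in HCb. fold A in HCb.
  assert (2 * (eta / (3 * C)) * Pr Ps (fun w => A < X w) <= 2 * eta / 3 * tail (distr Ps (fun w => X w * Y w)) x).
  { replace (2 * eta / 3 * tail (distr Ps (fun w => X w * Y w)) x) with
      (2 * (eta / (3 * C)) * (C * tail (distr Ps (fun w => X w * Y w)) x)) by (field; lra).
    apply Rmult_le_compat_l; auto. apply Rmult_le_pos; [lra|]. left; apply Rdiv_lt_0_compat; lra. }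
  unfold E in *. lra.
Qed.
End Half.


Lemma ratio1 p q eta : 0 < q -> 0 <= eta -> q <= p -> p <= (1 + eta) * q -> Rabs (p / q - 1) <= eta.
Proof.
  intros Hq He H1 H2.
  replace (p / q - 1) with ((p - q) / q) by (field; lra).
  rewrite Rabs_right.
  - apply Rle_trans with ((eta * q) / q); [|right; field; lra].
    unfold Rdiv; apply Rmult_le_compat_r; [left; apply Rinv_0_lt_compat|]; lra.
  - apply Rle_ge, Rdiv_le_0_compat; lra.
Qed.

Lemma ratio2 p q eta : 0 < p -> 0 <= eta -> p <= q -> q <= (1 + eta) * p -> Rabs (p / q - 1) <= eta.
Proof.
  intros Hp He H1 H2.
  replace (p / q - 1) with (- ((q - p) / q)) by (field; lra).
  rewrite Rabs_Ropp, Rabs_right.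
  - apply Rle_trans with ((q - p) / p).
    + apply div_anti; lra.
    + apply Rle_trans with ((eta * p) / p); [|right; field; lra].
      unfold Rdiv; apply Rmult_le_compat_r; [left; apply Rinv_0_lt_compat|]; lra.
  - apply Rle_ge, Rdiv_le_0_compat; lra.
Qed.

Lemma indep_swap Ps X Y : independent Ps X Y -> independent Ps Y X.
Proof.
  intros H B1 B2 h1 h2. rewrite (Pr_ext Ps _ (fun w => B2 (X w) /\ B1 (Y w))) by (intros; tauto).
  rewrite H; auto; ring.
Qed.

Lemma prod_comm Ps (X Y : Omega Ps -> R) : (fun w => Y w * X w) = (fun w => X w * Y w).
Proof. apply functional_extensionality; intros; ring. Qed.

Theorem theorem3p2 (Ps : prob_space) (X Y : Omega Ps -> R) (a : R -> R)
  (HXrv : random_variable Ps X) (HYrv : random_variable Ps Y)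
  (Hind : independent Ps X Y)
  (HXnn : forall w, 0 <= X w) (HYnn : forall w, 0 <= Y w)
  (HFc : continuity (distr Ps X)) (HGc : continuity (distr Ps Y))
  (HF : asymp_eq (fun x => tail (distr Ps X) (x - / x)) (tail (distr Ps X)))
  (HG : asymp_eq (fun x => tail (distr Ps Y) (x - / x)) (tail (distr Ps Y)))
  (Hapos : forall x, 0 <= x -> 0 < a x)
  (Hamono : nondecr_on_nonneg a) (Hainf : tends_to_infty a)
  (Hxamono : nondecr_on_nonneg (fun x => x / a x))
  (Hxainf : tends_to_infty (fun x => x / a x))
  (HGO : big_O (fun x => tail (distr Ps Y) (a x))
               (tail (distr Ps (fun w => X w * Y w))))
  (HFO : big_O (fun x => tail (distr Ps X) (a x))
               (tail (distr Ps (fun w => X w * Y w)))) :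
  long_tailed (distr Ps (fun w => X w * Y w)).
Proof.
  set (TH := tail (distr Ps (fun w => X w * Y w))).
  assert (HHle : forall r, meas Ps (fun w => X w * Y w <= r)) by (apply meas_prod_le; auto).
  assert (THeq : forall r, TH r = Pr Ps (fun w => r < X w * Y w)) by (intros; apply tail_eq; auto).
  assert (THnn : forall r, 0 <= TH r) by (intros; apply tail_nonneg; auto).
  assert (TFpos : forall r, 0 < tail (distr Ps X) r).
  { apply T_pos; auto; [apply tail_mono|apply tail_nonneg]; apply rv_le; auto. }
  assert (TGpos : forall r, 0 < tail (distr Ps Y) r).
  { apply T_pos; auto; [apply tail_mono|apply tail_nonneg]; apply rv_le; auto. }
  assert (THpos : forall r, 0 < TH r).
  { intros r. pose proof (Rmax_l 1 r). pose proof (Rmax_r 1 r). set (q := Rmax 1 r) in *.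
    rewrite THeq. apply Rlt_le_trans with (Pr Ps (fun w => q < X w /\ q < Y w)).
    - rewrite (Hind (fun v => q < v) (fun v => q < v)) by apply borel_gt.
      rewrite <- !(tail_eq Ps _ (rv_le Ps _ HXrv)), <- (tail_eq Ps _ (rv_le Ps _ HYrv)).
      apply Rmult_lt_0_compat; auto.
    - apply Pr_mono.
      + apply meas_and; [apply (mX Ps X HXrv (fun v => q < v))|apply (mY Ps Y HYrv (fun v => q < v))]; apply borel_gt.
      + apply meas_prod_gt; auto.
      + intros w [h1 h2]. assert (q * q < X w * Y w) by (apply Rmult_le_0_lt_compat; lra). assert (q <= q * q) by nra. lra. }
  assert (HOgen : forall (T : R -> R), (forall r s, r <= s -> T s <= T r) ->
     big_O (fun x => T (a x)) TH -> forall Z0, 1 <= Z0 -> exists C M, 0 < C /\ forall x, M <= x ->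
     T (x / Z0) <= C * TH x).
  { intros T Tm [C [M HCM]] Z0 HZ. destruct (Hxainf Z0) as [M0 HM0].
    exists (Rmax C 1), (Rmax M (Rmax M0 0)). split; [pose proof (Rmax_r C 1); lra|].
    intros x Hx. pose proof (Rmax_l M (Rmax M0 0)). pose proof (Rmax_r M (Rmax M0 0)).
    pose proof (Rmax_l M0 0). pose proof (Rmax_r M0 0).
    specialize (HCM x ltac:(lra)). specialize (HM0 x ltac:(lra)).
    assert (Ha : 0 < a x) by (apply Hapos; lra).
    assert (Hax : a x <= x / Z0).
    { apply div_le; [lra|]. apply (Rmult_le_reg_r (/ a x)); [apply Rinv_0_lt_compat; auto|].
      replace (Z0 * a x * / a x) with Z0 by (field; lra). exact HM0. }
    apply Rle_trans with (T (a x)); [apply Tm; auto|].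
    apply Rle_trans with (Rabs (T (a x))); [apply Rle_abs|].
    eapply Rle_trans; [apply HCM|]. rewrite (Rabs_right (TH x)) by (apply Rle_ge; auto).
    apply Rmult_le_compat_r; auto. apply Rmax_l. }
  assert (HOX := HOgen _ (tail_mono Ps X (rv_le Ps X HXrv)) HFO).
  assert (HOY := HOgen _ (tail_mono Ps Y (rv_le Ps Y HYrv)) HGO).
  assert (Main : forall t eta, 0 < t -> 0 < eta -> exists M, forall x, M <= x ->
     Pr Ps (fun w => x - t < X w * Y w <= x) <= eta * TH x).
  { intros t eta Ht He.
    destruct (half Ps X Y HXrv HYrv Hind HXnn HYnn HG HGc HOX t (eta/2) Ht ltac:(lra)) as [M1 HM1].
    assert (HOY' : forall Z0, 1 <= Z0 -> exists C M, 0 < C /\ forall x, M <= x ->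
       tail (distr Ps Y) (x / Z0) <= C * tail (distr Ps (fun w => Y w * X w)) x).
    { rewrite (prod_comm Ps X Y). exact HOY. }
    destruct (half Ps Y X HYrv HXrv (indep_swap Ps X Y Hind) HYnn HXnn HF HFc HOY' t (eta/2) Ht ltac:(lra)) as [M2 HM2].
    exists (Rmax (Rmax M1 M2) t). intros x Hx.
    pose proof (Rmax_l (Rmax M1 M2) t). pose proof (Rmax_r (Rmax M1 M2) t).
    pose proof (Rmax_l M1 M2). pose proof (Rmax_r M1 M2).
    specialize (HM1 x ltac:(lra)). specialize (HM2 x ltac:(lra)).
    rewrite (prod_comm Ps X Y) in HM2.
    set (c := sqrt (x - t)) in *.
    assert (Hcc : c * c = x - t) by (apply sqrt_sqrt; lra).
    assert (Hc0 : 0 <= c) by apply sqrt_pos.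
    eapply Rle_trans.
    { apply (Pr_mono Ps _ (fun w => (x - t < X w * Y w <= x /\ c < X w) \/ (x - t < Y w * X w <= x /\ c < Y w))).
      - apply meas_E; auto.
      - apply meas_or; apply meas_and.
        + apply meas_E; auto.
        + apply (mX Ps X HXrv (fun v => c < v)), borel_gt.
        + apply (meas_E Ps Y X); auto.
        + apply (mY Ps Y HYrv (fun v => c < v)), borel_gt.
      - intros w hw. destruct (Rle_or_lt (X w) c); destruct (Rle_or_lt (Y w) c).
        + exfalso. pose proof (HXnn w). pose proof (HYnn w).
          assert (X w * Y w <= c * c) by (apply Rmult_le_compat; auto). lra.
        + right; split; [rewrite Rmult_comm|]; tauto.
        + left; tauto.
        + left; tauto. }
    eapply Rle_trans; [apply Pr_sub|].
    - apply meas_and; [apply meas_E; auto|apply (mX Ps X HXrv (fun v => c < v)), borel_gt].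
    - apply meas_and; [apply (meas_E Ps Y X); auto|apply (mY Ps Y HYrv (fun v => c < v)), borel_gt].
    - fold TH in HM1, HM2. lra. }
  split; [exact THpos|].
  intros t eps Heps.
  destruct (Rlt_le_dec 0 t) as [Ht|Ht].
  - destruct (Main t (eps / 2) Ht ltac:(lra)) as [M HM]. exists (Rmax M t). intros x Hx.
    pose proof (Rmax_l M t). pose proof (Rmax_r M t).
    specialize (HM x ltac:(lra)). fold TH.
    rewrite (Pr_oc Ps _ HHle) in HM by lra. fold TH in HM.
    eapply Rle_lt_trans; [apply ratio1 with (eta := eps / 2)|]; auto; try lra.
    apply tail_mono; auto; lra.
  - destruct (Req_dec t 0) as [E|E].
    + exists 0. intros x _. subst t. fold TH. rewrite Rminus_0_r.
      replace (TH x / TH x - 1) with 0 by (field; pose proof (THpos x); lra). rewrite Rabs_R0; lra.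
    + set (s := - t). assert (Hs : 0 < s) by (unfold s; lra).
      destruct (Main s (eps / 2) Hs ltac:(lra)) as [M HM]. exists M. intros x Hx.
      specialize (HM (x + s) ltac:(lra)). fold TH.
      replace (x + s - s) with x in HM by ring.
      rewrite (Pr_oc Ps _ HHle) in HM by lra. fold TH in HM.
      replace (x - t) with (x + s) by (unfold s; ring).
      eapply Rle_lt_trans; [apply ratio2 with (eta := eps / 2)|]; auto; try lra.
      apply tail_mono; auto; lra.
Qed.
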